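(* Let $S\subset\mathbb{R}^n_+$ be compact and convex with $0\in S$ and $\overline{S\cap\mathbb{Q}^n}=S$. Let $f=(f_1,\dots,f_n)\colon\mathbb{C}^\ell\to\mathbb{C}^n$ be a polynomial map with no $f_j$ identically zero, write $f_j(z)=\sum_{\alpha\in\mathbb{N}^\ell}a_{j,\alpha}z^\alpha$, let $I_j=\{\alpha\in\mathbb{N}^\ell\,;\,a_{j,\alpha}\neq0\}$, let $S_j\subset\mathbb{R}^\ell_+$ be the convex hull of $I_j$, and let $S'=\bigcup_{x\in S}(x_1S_1+\cdots+x_nS_n)\subset\mathbb{R}^\ell_+$. Then $S'$ is the smallest compact convex subset $T$ of $\mathbb{R}^\ell_+$ with $0\in T$ for which $f^*\big(\mathcal{P}^S_m(\mathbb{C}^n)\big)\subseteq\mathcal{P}^T_m(\mathbb{C}^\ell)$ for all $m\in\mathbb{N}$.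
   Context: $\mathbb{R}_+=[0,\infty)$, $\mathbb{N}=\{0,1,2,\dots\}$. For a subset $T\subset\mathbb{R}^k_+$ and $m\in\mathbb{N}$, $\mathcal{P}^T_m(\mathbb{C}^k)$ is the space of polynomials $\sum_{\alpha\in(mT)\cap\mathbb{N}^k}a_\alpha z^\alpha$. $f^*p=p\circ f$. Minkowski sums and scalar multiples: $x_jS_j=\{x_js\,;\,s\in S_j\}$. *)

(* Defs.v *)
From HB Require Import structures.
From mathcomp Require Import all_boot all_order all_algebra.
From mathcomp Require Import mpoly.
From mathcomp Require Import all_classical all_reals all_analysis.
From mathcomp Require complex.
Import complex.ComplexField.
Import numFieldNormedType.Exports.
Set Implicit Arguments. Unset Strict Implicit. Unset Printing Implicit Defensive.
Import Order.TTheory GRing.Theory Num.Theory.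
Local Open Scope ring_scope.
Local Open Scope classical_set_scope.

Notation cplx R := (complex.complex R).

Notation cpoly R k := (mpoly.mpoly k (cplx R)).

Definition orthant (R : realType) (k : nat) : set 'rV[R]_k :=
  [set x | forall i, 0 <= x ord0 i].

Definition convex_set_rV (R : realType) (k : nat) (A : set 'rV[R]_k) : Prop :=
  forall x y t, A x -> A y -> 0 <= t -> t <= 1 -> A (t *: x + (1 - t) *: y).

Definition conv_hull (R : realType) (k : nat) (A : set 'rV[R]_k) : set 'rV[R]_k :=
  [set x | exists (N : nat) (w : 'I_N -> R) (p : 'I_N -> 'rV[R]_k),
     [/\ forall i, A (p i), forall i, 0 <= w i, \sum_(i < N) w i = 1
       & x = \sum_(i < N) w i *: p i]].

Definition is_rat (R : realType) (r : R) : Prop := exists q : rat, r = ratr q.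

Definition rat_points (R : realType) (k : nat) : set 'rV[R]_k :=
  [set x | forall i, is_rat (x ord0 i)].

Definition mnm_pt (R : realType) (k : nat) (a : mpoly.multinom k) : 'rV[R]_k :=
  \row_i ((mpoly.fun_of_multinom a i)%:R : R).

Definition supp_pts (R : realType) (k : nat) (p : cpoly R k) : set 'rV[R]_k :=
  [set mnm_pt R a | a in [set a : mpoly.multinom k | a \in mpoly.msupp p]].

(* P^T_m(C^k): polynomials whose exponents all lie in (m T) ∩ N^k *)
Definition PT (R : realType) (k : nat) (T : set 'rV[R]_k) (m : nat) : set (cpoly R k) :=
  [set p | forall a : mpoly.multinom k, a \in mpoly.msupp p -> exists2 t, T t & mnm_pt R a = m%:R *: t].

Definition pullback (R : realType) (n l : nat) (f : n.-tuple (cpoly R l)) (p : cpoly R n)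
  : cpoly R l := mpoly.comp_mpoly f p.

Definition S_prime (R : realType) (n l : nat) (S : set 'rV[R]_n)
    (f : n.-tuple (cpoly R l)) : set 'rV[R]_l :=
  [set y | exists2 x, S x & exists s : 'I_n -> 'rV[R]_l,
     (forall j, conv_hull (supp_pts (tnth f j)) (s j)) /\
     y = \sum_(j < n) x ord0 j *: s j].

Definition admissible (R : realType) (n l : nat) (S : set 'rV[R]_n)
    (f : n.-tuple (cpoly R l)) (T : set 'rV[R]_l) : Prop :=
  [/\ compact T, convex_set_rV T, T `<=` @orthant R l, T 0
    & forall (m : nat) (p : cpoly R n), PT S m p -> PT T m (pullback f p)].

(* Main.v *)
Require Import Defs.
From HB Require Import structures.
From mathcomp Require Import all_boot all_order all_algebra.
From mathcomp Require Import mpoly.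
From mathcomp Require Import all_classical all_reals all_analysis.
From mathcomp Require complex.
From mathcomp Require Import ring lra.
Import complex.ComplexField.
Import numFieldNormedType.Exports.
Set Implicit Arguments. Unset Strict Implicit. Unset Printing Implicit Defensive.
Import Order.TTheory GRing.Theory Num.Theory.
Local Open Scope ring_scope.
Local Open Scope classical_set_scope.

Section Poly.
Variable R : realType.
Variable l : nat.
Implicit Types (p q : cpoly R l) (w : 'rV[R]_l).

Definition dotp (w v : 'rV[R]_l) : R := \sum_i w ord0 i * v ord0 i.
Definition valw w (a : 'X_{1..l}) := dotp w (mnm_pt R a).

Lemma mnm_ptD (a b : 'X_{1..l}) : mnm_pt R (a + b)%MM = mnm_pt R a + mnm_pt R b.
Proof. by apply/rowP => i; rewrite !mxE mnmDE natrD. Qed.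

Lemma mnm_pt0 : mnm_pt R (0%MM : 'X_{1..l}) = 0.
Proof. by apply/rowP => i; rewrite !mxE mnm0E. Qed.

Lemma dotpD w u v : dotp w (u + v) = dotp w u + dotp w v.
Proof. by rewrite /dotp -big_split; apply: eq_bigr => i _; rewrite mxE mulrDr. Qed.

Lemma dotpZ w c v : dotp w (c *: v) = c * dotp w v.
Proof. by rewrite /dotp mulr_sumr; apply: eq_bigr => i _; rewrite mxE mulrCA. Qed.

Lemma dotp0 w : dotp w 0 = 0.
Proof. by rewrite /dotp big1 // => i _; rewrite mxE mulr0. Qed.

Lemma valwD w a b : valw w (a + b)%MM = valw w a + valw w b.
Proof. by rewrite /valw mnm_ptD dotpD. Qed.

Lemma valw0 w : valw w 0%MM = 0.
Proof. by rewrite /valw mnm_pt0 dotp0. Qed.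

Definition istop p w v := exists2 a, a \in msupp p &
  (valw w a = v /\ forall b, b \in msupp p -> valw w b <= v).

Lemma seq_max w (s : seq 'X_{1..l}) : s != [::] ->
  exists2 a, a \in s & forall b, b \in s -> valw w b <= valw w a.
Proof.
elim: s => // x s IH _.
case: (eqVneq s [::]) => [->|/IH [a ain amax]].
  by exists x; rewrite ?mem_head // => b; rewrite inE => /eqP ->.
case: (leP (valw w x) (valw w a)) => h.
  exists a; first by rewrite inE ain orbT.
  by move=> b; rewrite inE => /orP [/eqP ->//|/amax].
exists x; first exact: mem_head.
move=> b; rewrite inE => /orP [/eqP ->//|/amax hb].
exact: (le_trans hb (ltW h)).
Qed.

Lemma top_exists p w : p != 0 -> exists v, istop p w v.
Proof.
move=> pn0; have : msupp p != [::] by rewrite msupp_eq0.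
move=> /(seq_max w) [a ain amax]; exists (valw w a); exists a => //.
Qed.

Lemma supp_filt (P : pred 'X_{1..l}) p m :
  m \in msupp (\sum_(i <- msupp p | P i) p@_i *: 'X_[i]) -> m \in msupp p /\ P m.
Proof.
move=> /msupp_sum_le /flattenP [s /mapP [i]]; rewrite mem_filter => /andP [Pi ip] ->.
move=> /msuppZ_le; rewrite msuppX inE => /eqP ->; by [].
Qed.

Lemma supp_mul_le p q w A B :
  (forall m, m \in msupp p -> valw w m <= A) ->
  (forall m, m \in msupp q -> valw w m <= B) ->
  forall m, m \in msupp (p * q) -> valw w m <= A + B.
Proof.
move=> hp hq m /msuppM_le /allpairsP [[m1 m2] /= [h1 h2 ->]].
by rewrite valwD lerD // ?hp ?hq.
Qed.

Lemma supp_mul_lt p q w A B :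
  (forall m, m \in msupp p -> valw w m <= A) ->
  (forall m, m \in msupp q -> valw w m < B) ->
  forall m, m \in msupp (p * q) -> valw w m < A + B.
Proof.
move=> hp hq m /msuppM_le /allpairsP [[m1 m2] /= [h1 h2 ->]].
by rewrite valwD ler_ltD // ?hp ?hq.
Qed.

Lemma top_split p w u : istop p w u -> exists p1 p2, [/\ p = p1 + p2, p1 != 0,
  forall m, m \in msupp p1 -> valw w m = u &
  forall m, m \in msupp p2 -> valw w m < u].
Proof.
move=> [a ain [au amax]].
set p1 := (\sum_(m <- msupp p | valw w m == u) p@_m *: 'X_[m]).
set p2 := (\sum_(m <- msupp p | ~~ (valw w m == u)) p@_m *: 'X_[m]).
have pE : p = p1 + p2 by rewrite {1}(mpolyE p) (bigID (fun m => valw w m == u)).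
exists p1, p2; split => //.
- apply/eqP => h0; move: ain; rewrite pE h0 add0r => /supp_filt [_].
  by rewrite au eqxx.
- by move=> m /supp_filt [_ /eqP].
- move=> m /supp_filt [mp hm]; rewrite lt_neqAle hm amax //.
Qed.

Lemma top_mul p q w u v : istop p w u -> istop q w v -> istop (p * q) w (u + v).
Proof.
move=> tp tq.
have [p1 [p2 [pE p1n0 hp1 hp2]]] := top_split tp.
have [q1 [q2 [qE q1n0 hq1 hq2]]] := top_split tq.
have hp1' : forall m, m \in msupp p1 -> valw w m <= u by move=> m /hp1 ->.
have hq1' : forall m, m \in msupp q1 -> valw w m <= v by move=> m /hq1 ->.
have hp2' : forall m, m \in msupp p2 -> valw w m <= u by move=> m /hp2 /ltW.
have n0 : p1 * q1 != 0 by exact: mulf_neq0.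
have : msupp (p1 * q1) != [::] by rewrite msupp_eq0.
case E : (msupp (p1 * q1)) => [//|g s] _.
have gin : g \in msupp (p1 * q1) by rewrite E mem_head.
have gv : valw w g = u + v.
  move: (gin) => /msuppM_le /allpairsP [[m1 m2] /= [h1 h2 ->]].
  by rewrite valwD hp1 // hq1.
set r := p1 * q2 + p2 * q1 + p2 * q2.
have pqE : p * q = p1 * q1 + r by rewrite pE qE /r; ring.
have hr : forall m, m \in msupp r -> valw w m < u + v.
  move=> m /msuppD_le; rewrite mem_cat => /orP [|].
    move=> /msuppD_le; rewrite mem_cat => /orP [|].
      exact: (supp_mul_lt hp1' hq2).
    by rewrite addrC mulrC; apply: (supp_mul_lt hq1' hp2).
  exact: (supp_mul_lt hp2' hq2).
exists g.
- rewrite mcoeff_msupp pqE mcoeffD.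
  have -> : r@_g = 0.
    apply: memN_msupp_eq0; apply/negP => /hr; by rewrite gv ltxx.
  by rewrite addr0 -mcoeff_msupp.
- split => // b.
  have hp : forall m, m \in msupp p -> valw w m <= u by case: tp => ? ? [<- ?].
  have hq : forall m, m \in msupp q -> valw w m <= v by case: tq => ? ? [<- ?].
  exact: supp_mul_le hp hq b.
Qed.

Lemma top_one w : istop (1 : cpoly R l) w 0.
Proof.
exists 0%MM; rewrite msupp1 ?mem_head //; split; first exact: valw0.
by move=> b; rewrite inE => /eqP ->; rewrite valw0.
Qed.

Lemma top_exp p w u k : istop p w u -> istop (p ^+ k) w (k%:R * u).
Proof.
move=> tp; elim: k => [|k IH]; first by rewrite expr0 mul0r; exact: top_one.
by rewrite exprS -addn1 natrD mulrDl mul1r addrC; apply: top_mul.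
Qed.

Lemma top_prod n (F : 'I_n -> cpoly R l) (U : 'I_n -> R) w :
  (forall j, istop (F j) w (U j)) -> istop (\prod_j F j) w (\sum_j U j).
Proof.
move=> h; apply: (big_ind2 (fun p v => istop p w v)) => //.
- exact: top_one.
- by move=> ? ? ? ? ; apply: top_mul.
Qed.

End Poly.

Section Conv.
Variable R : realType.
Variable k : nat.
Implicit Types (A : set 'rV[R]_k).

Lemma splitl N1 N2 (i : 'I_N1) : fintype.split (lshift N2 i) = inl i.
Proof. exact: (unsplitK (inl _ i)). Qed.
Lemma splitr N1 N2 (i : 'I_N2) : fintype.split (rshift N1 i) = inr i.
Proof. exact: (unsplitK (inr _ i)). Qed.

Lemma ch_pt A x : A x -> conv_hull A x.
Proof.
move=> Ax; exists 1%N, (fun=> 1), (fun=> x); split => //.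
- by rewrite big_ord1.
- by rewrite big_ord1 scale1r.
Qed.

Lemma ch_convex A u v t : conv_hull A u -> conv_hull A v -> 0 <= t -> t <= 1 ->
  conv_hull A (t *: u + (1 - t) *: v).
Proof.
move=> [N1 [w1 [p1 [Ap1 w1p s1 ->]]]] [N2 [w2 [p2 [Ap2 w2p s2 ->]]]] t0 t1.
exists (N1 + N2)%N.
exists (fun i => match fintype.split i with inl a => t * w1 a | inr b => (1 - t) * w2 b end).
exists (fun i => match fintype.split i with inl a => p1 a | inr b => p2 b end).
split.
- by move=> i; case: (fintype.split i).
- move=> i; case: (fintype.split i) => a; apply: mulr_ge0 => //; by rewrite subr_ge0.
- rewrite big_split_ord /=.
  under eq_bigr do rewrite splitl.
  under [X in _ + X = _]eq_bigr do rewrite splitr.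
  by rewrite -!mulr_sumr s1 s2 !mulr1 addrC subrK.
- rewrite big_split_ord /=.
  under [X in _ = X + _]eq_bigr do rewrite splitl.
  under [X in _ = _ + X]eq_bigr do rewrite splitr.
  rewrite !scaler_sumr; congr (_ + _); apply: eq_bigr => i _; by rewrite scalerA.
Qed.

Lemma ch_dot A w M x : (forall a, A a -> dotp w a <= M) -> conv_hull A x -> dotp w x <= M.
Proof.
move=> hA [N [wt [p [Ap wp s1 ->]]]].
have -> : dotp w (\sum_(i < N) wt i *: p i) = \sum_(i < N) wt i * dotp w (p i).
  rewrite (big_morph (dotp w) (dotpD w) (dotp0 w)).
  by apply: eq_bigr => i _; rewrite dotpZ.
have -> : M = \sum_(i < N) wt i * M by rewrite -mulr_suml s1 mul1r.
by apply: ler_sum => i _; apply: ler_wpM2l => //; apply: hA.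
Qed.

Lemma ch_orthant A x : A `<=` @orthant R k -> conv_hull A x -> orthant x.
Proof.
move=> hA [N [wt [p [Ap wp s1 ->]]]] i.
rewrite summxE; apply: sumr_ge0 => j _; rewrite mxE; apply: mulr_ge0 => //.
exact: hA (Ap j) i.
Qed.

End Conv.

Section Supp.
Variable R : realType.
Variable l : nat.
Implicit Types (p q : cpoly R l).

Lemma supp_pts_in q a : a \in msupp q -> supp_pts q (mnm_pt R a).
Proof. by move=> ain; exists a. Qed.

Lemma supp_ex q : q != 0 -> exists a, a \in msupp q.
Proof.
move=> qn0; have : msupp q != [::] by rewrite msupp_eq0.
by case: (msupp q) => // a s _; exists a; rewrite mem_head.
Qed.

Lemma supp_exp q kk a : q != 0 -> a \in msupp (q ^+ kk) ->
  exists2 s, conv_hull (supp_pts q) s & mnm_pt R a = kk%:R *: s.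
Proof.
move=> qn0; elim: kk a => [|kk IH] a.
  rewrite expr0 msupp1 inE => /eqP ->.
  have [b bin] := supp_ex qn0.
  by exists (mnm_pt R b); [apply: ch_pt; exact: supp_pts_in|rewrite mnm_pt0 scale0r].
rewrite exprS => /msuppM_le /allpairsP [[m1 m2] /= [h1 /IH [s2 hs2 e2] ->]].
have kpos : 0 < (kk.+1)%:R :> R by rewrite ltr0n.
set t := ((kk.+1)%:R : R)^-1.
exists (t *: mnm_pt R m1 + (1 - t) *: s2).
  apply: ch_convex => //; first by apply: ch_pt; exact: supp_pts_in.
    by rewrite /t invr_ge0 ltW.
  by rewrite /t invf_le1 // -natr1 lerDr.
rewrite mnm_ptD e2 scalerDr !scalerA /t mulfV ?gt_eqF // scale1r.
congr (_ + _); congr (_ *: _).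
by rewrite mulrBr mulr1 mulfV ?gt_eqF // -natr1 addrK.
Qed.

Lemma supp_prod_seq (I : eqType) (r : seq I) (F : I -> cpoly R l) a : uniq r ->
  a \in msupp (\prod_(i <- r) F i) ->
  exists b : I -> 'X_{1..l}, (forall i, i \in r -> b i \in msupp (F i)) /\
    a = \big[+%MM/0%MM]_(i <- r) b i.
Proof.
elim: r a => [|x r IH] a.
  by move=> _; rewrite big_nil msupp1 inE => /eqP ->; exists (fun=> 0%MM); rewrite big_nil.
move=> /= /andP [xr ur]; rewrite big_cons.
move=> /msuppM_le /allpairsP [[m1 m2] /= [h1 /(IH _ ur) [b [hb ->]] ->]].
exists (fun i => if i == x then m1 else b i); split.
  by move=> i; rewrite inE; case: eqP => [->//|_ /= /hb].
rewrite big_cons eqxx; congr (_ + _)%MM.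
apply: eq_big_seq => i ir; case: eqP => // ie; by rewrite -ie ir in xr.
Qed.

Lemma mnm_pt_sum (I : Type) (r : seq I) (b : I -> 'X_{1..l}) :
  mnm_pt R (\big[+%MM/0%MM]_(i <- r) b i) = \sum_(i <- r) mnm_pt R (b i).
Proof. apply: (big_morph (fun a : 'X_{1..l} => mnm_pt R a)); [exact: mnm_ptD | exact: mnm_pt0]. Qed.

Lemma pull_supp n (f : n.-tuple (cpoly R l)) (p : cpoly R n) a :
  (forall j, tnth f j != 0) -> a \in msupp (pullback f p) ->
  exists2 kk, kk \in msupp p & exists s : 'I_n -> 'rV[R]_l,
    (forall j, conv_hull (supp_pts (tnth f j)) (s j)) /\
    mnm_pt R a = \sum_j (kk j)%:R *: s j.
Proof.
move=> fn0; rewrite /pullback comp_mpolyE => /msupp_sum_le /flattenP [s0 /mapP [kk]].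
rewrite mem_filter => /andP [_ kin] -> /msuppZ_le.
move=> /(supp_prod_seq (index_enum_uniq _)) [b [hb ->]].
exists kk => //.
have : forall j : 'I_n, exists s, conv_hull (supp_pts (tnth f j)) s /\
    mnm_pt R (b j) = (kk j)%:R *: s.
  move=> j; have [s hs e] := supp_exp (fn0 j) (hb j (mem_index_enum j)).
  by exists s.
move=> /choice [s hs]; exists s; split; first by move=> j; case: (hs j).
rewrite mnm_pt_sum; apply: eq_bigr => j _; by case: (hs j).
Qed.

End Supp.

Section SPrime.
Variable R : realType.
Variables n l : nat.
Variable S : set 'rV[R]_n.
Variable f : n.-tuple (cpoly R l).

Lemma Sp_orthant : S `<=` @orthant R n -> S_prime S f `<=` @orthant R l.
Proof.
move=> hS y [x Sx [s [hs ->]]] i.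
rewrite summxE; apply: sumr_ge0 => j _; rewrite mxE; apply: mulr_ge0.
  exact: hS Sx j.
have hsub : supp_pts (tnth f j) `<=` @orthant R l by move=> z [b _ <-] i'; rewrite mxE ler0n.
exact: (ch_orthant hsub (hs j) i).
Qed.

Lemma Sp_choose : (forall j, tnth f j != 0) ->
  exists s : 'I_n -> 'rV[R]_l, forall j, conv_hull (supp_pts (tnth f j)) (s j).
Proof.
move=> fn0.
have : forall j : 'I_n, exists s, conv_hull (supp_pts (tnth f j)) s.
  move=> j; have [a ain] := supp_ex (fn0 j).
  by exists (mnm_pt R a); apply: ch_pt; exact: supp_pts_in.
by move=> /choice [s hs]; exists s.
Qed.

Lemma Sp0 : S 0 -> (forall j, tnth f j != 0) -> S_prime S f 0.
Proof.
move=> S0 fn0; have [s hs] := Sp_choose fn0.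
exists 0 => //; exists s; split => //.
by rewrite big1 // => j _; rewrite mxE scale0r.
Qed.

Lemma Sp_convex : S `<=` @orthant R n -> convex_set_rV S -> convex_set_rV (S_prime S f).
Proof.
move=> hS cS y y' t [x Sx [s [hs ->]]] [x' Sx' [s' [hs' ->]]] t0 t1.
set x'' := t *: x + (1 - t) *: x'.
have t1' : 0 <= 1 - t by rewrite subr_ge0.
pose lam j := t * x ord0 j / x'' ord0 j.
have xE j : x'' ord0 j = t * x ord0 j + (1 - t) * x' ord0 j by rewrite !mxE.
have g1 j : 0 <= t * x ord0 j by apply: mulr_ge0 => //; exact: hS Sx j.
have g2 j : 0 <= (1 - t) * x' ord0 j by apply: mulr_ge0 => //; exact: hS Sx' j.
have key j : x'' ord0 j * lam j = t * x ord0 j.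
  rewrite /lam; case: (eqVneq (x'' ord0 j) 0) => [h0|hn0].
    rewrite h0 mul0r; apply/esym; move: h0; rewrite xE => /eqP.
    by rewrite paddr_eq0 // => /andP [/eqP -> _].
  by rewrite mulrCA mulfV // mulr1.
exists x''; first exact: cS.
exists (fun j => lam j *: s j + (1 - lam j) *: s' j); split.
  move=> j; apply: ch_convex => //.
    by rewrite /lam; apply: divr_ge0 => //; rewrite xE; apply: addr_ge0.
  rewrite /lam; case: (eqVneq (x'' ord0 j) 0) => [->|hn0]; first by rewrite invr0 mulr0.
  have xp : 0 < x'' ord0 j by rewrite lt_neqAle eq_sym hn0 xE addr_ge0.
  by rewrite ler_pdivrMr // mul1r xE lerDl.
rewrite !scaler_sumr -big_split; apply: eq_bigr => j _ /=.
by rewrite scalerDr !scalerA key mulrBr mulr1 key xE addrAC subrr add0r.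
Qed.

Lemma Sp_pull m (p : cpoly R n) : (forall j, tnth f j != 0) ->
  PT S m p -> PT (S_prime S f) m (pullback f p).
Proof.
move=> fn0 hp a /(pull_supp fn0) [kk kin [s [hs ->]]].
have [x Sx ex] := hp kk kin.
exists (\sum_j x ord0 j *: s j); first by exists x => //; exists s.
rewrite scaler_sumr; apply: eq_bigr => j _; rewrite scalerA.
have := congr1 (fun v : 'rV[R]_n => v ord0 j) ex; rewrite /= !mxE => ->; by [].
Qed.

End SPrime.

Section Cont.
Variable R : realType.

Lemma cont_sum (T : topologicalType) (V : normedModType R) N (F : 'I_N -> T -> V) :
  (forall i, continuous (F i)) -> continuous (fun x => \sum_(i < N) F i x).
Proof.
elim: N F => [|N IH] F hF.
  have -> : (fun x => \sum_(i < 0) F i x) = fun=> 0.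
    by apply: funext => x; rewrite big_ord0.
  exact: cst_continuous.
have -> : (fun x => \sum_(i < N.+1) F i x) =
    (fun x => \sum_(i < N) F (widen_ord (leqnSn N) i) x) + F ord_max.
  by apply: funext => x; rewrite big_ord_recr.
move=> x; apply: continuousD; first exact: (IH _ (fun i => hF _)).
exact: hF.
Qed.

Lemma cont_coord1 (m1 m2 : nat) (j : 'I_m1) :
  continuous (fun z : 'rV[R]_m1 * 'rV[R]_m2 => z.1 ord0 j).
Proof.
move=> z; apply: (@continuous_comp _ _ _ fst (fun M : 'rV[R]_m1 => M ord0 j)).
  exact: cvg_fst.
exact: coord_continuous.
Qed.

Lemma cont_coord2 (m1 m2 : nat) (j : 'I_m2) :
  continuous (fun z : 'rV[R]_m1 * 'rV[R]_m2 => z.2 ord0 j).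
Proof.
move=> z; apply: (@continuous_comp _ _ _ snd (fun M : 'rV[R]_m2 => M ord0 j)).
  exact: cvg_snd.
exact: coord_continuous.
Qed.

End Cont.

Section Compact.
Variable R : realType.
Variables n l : nat.
Variable S : set 'rV[R]_n.
Variable f : n.-tuple (cpoly R l).

Lemma reindex N (A : 'I_N -> 'rV[R]_l) N' (w : 'I_N' -> R) (p : 'I_N' -> 'rV[R]_l) :
  (forall i, exists k, p i = A k) -> (forall i, 0 <= w i) ->
  exists W : 'I_N -> R, [/\ forall k, 0 <= W k, \sum_k W k = \sum_i w i &
     \sum_k W k *: A k = \sum_i w i *: p i].
Proof.
elim: N' w p => [|N' IH] w p hp hw.
  exists (fun=> 0); split => //; rewrite ?big_ord0 big1 // => k _; by rewrite scale0r.
have [W [W0 W1 W2]] := IH (fun i => w (widen_ord (leqnSn N') i))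
   (fun i => p (widen_ord (leqnSn N') i)) (fun i => hp _) (fun i => hw _).
have [k0 hk0] := hp ord_max.
exists (fun k => W k + (k == k0)%:R * w ord_max); split.
- by move=> k; apply: addr_ge0 => //; apply: mulr_ge0 => //; rewrite ler0n.
- rewrite big_split /= big_ord_recr /= W1; congr (_ + _).
  rewrite (bigD1 k0) //= eqxx mul1r big1 ?addr0 // => k /negbTE ->; by rewrite mul0r.
- under eq_bigr do rewrite scalerDl.
  rewrite big_split /= big_ord_recr /= W2; congr (_ + _).
  rewrite (bigD1 k0) //= eqxx mul1r big1 ?addr0 ?hk0 // => k /negbTE ->.
  by rewrite mul0r scale0r.
Qed.

Definition sj j := msupp (tnth f j).
Definition NN := (\max_(j < n) size (sj j))%N.
Definition pts j (k : 'I_NN) := mnm_pt R (nth (head 0%MM (sj j)) (sj j) k).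
Definition Wset : set 'rV[R]_(n * NN) :=
  [set v | forall i, `[0, 1]%classic (v ord0 i)] `&`
  [set v | forall j, \sum_k v ord0 (mxvec_index j k) = 1].
Definition phi (z : 'rV[R]_n * 'rV[R]_(n * NN)) : 'rV[R]_l :=
  \sum_j z.1 ord0 j *: \sum_k z.2 ord0 (mxvec_index j k) *: pts j k.

Lemma pts_in : (forall j, tnth f j != 0) -> forall j k, supp_pts (tnth f j) (pts j k).
Proof.
move=> fn0 j k; apply: supp_pts_in; rewrite -/(sj j).
have : sj j != [::] by rewrite /sj msupp_eq0.
case E : (sj j) => [//|a s] _.
case: (ltnP k (size (a :: s))) => [/mem_nth -> //|/(nth_default _) ->].
exact: mem_head.
Qed.

Lemma pts_cover j z : supp_pts (tnth f j) z -> exists k, z = pts j k.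
Proof.
move=> [a ain <-].
have lt : (index a (sj j) < NN)%N.
  apply: (leq_trans _ (leq_bigmax j)); by rewrite index_mem.
by exists (Ordinal lt); rewrite /pts /= nth_index.
Qed.

Lemma Sp_image : (forall j, tnth f j != 0) -> S_prime S f = phi @` (S `*` Wset).
Proof.
move=> fn0; apply/seteqP; split.
- move=> y [x Sx [s [hs ->]]].
  have : forall j, exists W : 'I_NN -> R, [/\ forall k, 0 <= W k, \sum_k W k = 1 &
     s j = \sum_k W k *: pts j k].
    move=> j; have [N' [w [p [hp hw w1 ->]]]] := hs j.
    have [W [W0 W1 W2]] := reindex (fun i => pts_cover (hp i)) hw.
    by exists W; split => //; rewrite W1.
  move=> /choice [W hW].
  have Wle j k : W j k <= 1.
    case: (hW j) => W0 W1 _; rewrite -W1 (bigD1 k) //= lerDl.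
    by apply: sumr_ge0 => i _.
  exists (x, mxvec (\matrix_(j, k) W j k)).
    split => //; split.
    + move=> i; case/mxvec_indexP: i => j k; rewrite mxvecE mxE /=.
      rewrite in_itv /=; apply/andP; split; last exact: Wle.
      by case: (hW j).
    + move=> j /=; under eq_bigr do rewrite mxvecE mxE.
      by case: (hW j).
  rewrite /phi /=; apply: eq_bigr => j _; congr (_ *: _).
  case: (hW j) => _ _ ->; apply: eq_bigr => k _; by rewrite mxvecE mxE.
- move=> y [[x v] [Sx [hv1 hv2]] <-].
  exists x => //; exists (fun j => \sum_k v ord0 (mxvec_index j k) *: pts j k); split => //.
  move=> j; exists NN, (fun k => v ord0 (mxvec_index j k)), (pts j); split.
  + by move=> k; exact: pts_in.
  + move=> k; have := hv1 (mxvec_index j k); rewrite /= in_itv /= => /andP [] //.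
  + exact: hv2.
  + by [].
Qed.

Lemma C_closed : closed [set v : 'rV[R]_(n * NN) | forall j, \sum_k v ord0 (mxvec_index j k) = 1].
Proof.
have -> : [set v : 'rV[R]_(n * NN) | forall j, \sum_k v ord0 (mxvec_index j k) = 1] =
   \bigcap_(j in [set: 'I_n]) ((fun v : 'rV[R]_(n * NN) => \sum_k v ord0 (mxvec_index j k))
       @^-1` [set x | x = 1]).
  apply/seteqP; split => v /= h.
    by move=> j _; exact: h.
  by move=> j; exact: h.
apply: closed_bigI => j _; apply: preimage_closed; last exact: closed_eq.
move=> v _; apply: cont_sum => k; exact: coord_continuous.
Qed.

Lemma Wset_compact : compact Wset.
Proof.
apply: compact_closedI; last exact: C_closed.
have h := (@rV_compact R (n * NN) (fun=> `[0, 1]%classic) (fun=> @segment_compact R 0 1)).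
exact: h.
Qed.

Lemma phi_cont : continuous phi.
Proof.
rewrite /phi; apply: cont_sum => j z; apply: continuousZ; first exact: cont_coord1.
have hc : continuous (fun z : 'rV[R]_n * 'rV[R]_(n * NN) =>
    \sum_k z.2 ord0 (mxvec_index j k) *: pts j k).
  apply: cont_sum => k w; apply: continuousZr_tmp; exact: cont_coord2.
exact: hc.
Qed.

Lemma Sp_compact : compact S -> (forall j, tnth f j != 0) -> compact (S_prime S f).
Proof.
move=> cS fn0; rewrite (Sp_image fn0); apply: continuous_compact.
  exact: continuous_subspaceT phi_cont.
exact: compact_setX cS Wset_compact.
Qed.

End Compact.

Section Sep.
Variable R : realType.

Lemma rat_nat (r : R) : is_rat r -> 0 <= r ->
  exists e d : nat, (0 < d)%N /\ r = e%:R / d%:R.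
Proof.
move=> [q ->] r0.
have q0 : 0 <= q by rewrite -(ler_rat R) rmorph0.
exists `|numq q|%N, `|denq q|%N; split.
  by rewrite absz_gt0 gt_eqF // denq_gt0.
rewrite !natr_absz ger0_norm ?ler0z ?numq_ge0 // gtr0_norm ?ltr0z ?denq_gt0 //.
Qed.

Lemma rat_common n (x : 'I_n -> R) : (forall j, is_rat (x j)) -> (forall j, 0 <= x j) ->
  exists (m : nat) (kk : 'I_n -> nat), (0 < m)%N /\ forall j, (kk j)%:R = m%:R * x j.
Proof.
move=> hr hp.
have : forall j, exists ed : nat * nat, (0 < ed.2)%N /\ x j = ed.1%:R / ed.2%:R.
  by move=> j; have [e [d [d0 ->]]] := rat_nat (hr j) (hp j); exists (e, d).
move=> /choice [ed hed].
exists (\prod_j (ed j).2)%N, (fun j => (ed j).1 * \prod_(i | i != j) (ed i).2)%N; split.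
  by rewrite prodn_gt0 // => j; case: (hed j).
move=> j; case: (hed j) => d0 ->.
have dn0 : (ed j).2%:R != 0 :> R by rewrite pnatr_eq0 -lt0n.
rewrite [in RHS](bigD1 j) //= !natrM; field; exact: dn0.
Qed.

Variable l : nat.

Lemma dotpB (w u v : 'rV[R]_l) : dotp w (u - v) = dotp w u - dotp w v.
Proof. by rewrite /dotp -sumrB; apply: eq_bigr => i _; rewrite !mxE mulrBr. Qed.

Lemma dotp_expand (w u : 'rV[R]_l) e :
  dotp (w - e *: u) (w - e *: u) = dotp w w - 2 * e * dotp w u + e ^+ 2 * dotp u u.
Proof.
rewrite /dotp !mulr_sumr -sumrB -big_split; apply: eq_bigr => i _; rewrite !mxE /=; ring.
Qed.

Lemma dotp_ge0 (u : 'rV[R]_l) : 0 <= dotp u u.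
Proof. by apply: sumr_ge0 => i _; rewrite -expr2 sqr_ge0. Qed.

Lemma dotp_gt0 (u : 'rV[R]_l) : u != 0 -> 0 < dotp u u.
Proof.
move=> un0.
have [i hi] : exists i, u ord0 i != 0.
  have : ~ (forall i, u ord0 i = 0).
    move=> h; move/eqP: un0; apply; apply/rowP => i; by rewrite mxE h.
  by move=> /existsNP [i /eqP hi]; exists i.
rewrite /dotp (bigD1 i) //=; apply: ltr_pwDl.
  by rewrite -expr2 exprn_even_gt0.
by apply: sumr_ge0 => k _; rewrite -expr2 sqr_ge0.
Qed.

Lemma sep (T : set 'rV[R]_l) (y : 'rV[R]_l) : compact T -> convex_set_rV T ->
  T !=set0 -> ~ T y -> exists w, forall t, T t -> dotp w t < dotp w y.
Proof.
move=> cT cvT T0 nTy.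
pose d := fun t : 'rV[R]_l => \sum_i (y ord0 i - t ord0 i) * (y ord0 i - t ord0 i).
have dE t : d t = dotp (y - t) (y - t) by apply: eq_bigr => i _; rewrite !mxE.
have dcont : continuous d.
  have := @cont_sum R _ R _ (fun i (t : 'rV[R]_l) => (y ord0 i - t ord0 i) * (y ord0 i - t ord0 i)).
  apply => i t.
  have hc : {for t, continuous (fun t : 'rV[R]_l => y ord0 i - t ord0 i)}.
    apply: (@continuousB _ _ _ (fun=> y ord0 i) (fun t : 'rV[R]_l => t ord0 i)).
      exact: cst_continuous.
    exact: coord_continuous.
  exact: (continuousM hc hc).
have [c cTc cmin] := EVT_min_rV T0 cT (continuous_subspaceT dcont).
rewrite inE in cTc.
exists (y - c) => t Tt.
set w := y - c.
have key : dotp w (t - c) <= 0.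
  set a := dotp w (t - c); set b := dotp (t - c) (t - c).
  have b0 : 0 <= b by exact: dotp_ge0.
  have H e : 0 < e -> e <= 1 -> 2 * a <= e * b.
    move=> e0 e1.
    have Te : T (e *: t + (1 - e) *: c) by apply: cvT => //; exact: ltW.
    have := cmin _ (mem_set Te); rewrite !dE.
    have -> : y - (e *: t + (1 - e) *: c) = w - e *: (t - c).
      by apply/rowP => i; rewrite /w !mxE; ring.
    rewrite dotp_expand -/a -/b.
    move=> h; have : 2 * e * a <= e ^+ 2 * b by rewrite -subr_ge0; move: h; rewrite -subr_ge0; lra.
    move=> h2; rewrite -(ler_pM2l e0).
    have -> : e * (2 * a) = 2 * e * a by ring.
    by have -> : e * (e * b) = e ^+ 2 * b by ring.
  rewrite leNgt; apply/negP => a0.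
  have ab : 0 < a + b by rewrite ltr_wpDr.
  have := H (a / (a + b)) (divr_gt0 a0 ab).
  rewrite ler_pdivrMr // mul1r lerDl => /(_ b0).
  rewrite mulrAC ler_pdivlMr //.
  move=> h; have : 2 * a * (a + b) <= a * b by [].
  nra.
have yc : y != c by apply/negP => /eqP e; apply: nTy; rewrite e.
have : 0 < dotp w w by apply: dotp_gt0; rewrite subr_eq0.
have e1 : dotp w w = dotp w y - dotp w c by rewrite {2}/w dotpB.
rewrite dotpB in key; lra.
Qed.

End Sep.

Section Min.
Variable R : realType.
Variables n l : nat.
Variable S : set 'rV[R]_n.
Variable f : n.-tuple (cpoly R l).

Lemma dotp_sum (w : 'rV[R]_l) (x : 'I_n -> R) (s : 'I_n -> 'rV[R]_l) :
  dotp w (\sum_j x j *: s j) = \sum_j x j * dotp w (s j).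
Proof.
rewrite (big_morph (dotp w) (dotpD w) (dotp0 w)).
by apply: eq_bigr => j _; rewrite dotpZ.
Qed.

Lemma Sp_rat T : admissible S f T -> S `<=` @orthant R n -> (forall j, tnth f j != 0) ->
  forall x, S x -> rat_points x -> forall s : 'I_n -> 'rV[R]_l,
  (forall j, conv_hull (supp_pts (tnth f j)) (s j)) -> T (\sum_j x ord0 j *: s j).
Proof.
move=> [cT cvT _ T0 hpull] hS fn0 x Sx Qx s hs.
apply: contrapT => nT.
have [w hw] := sep cT cvT (ex_intro _ 0 T0) nT.
have [m [kk [m0 hkk]]] := @rat_common R n (fun j => x ord0 j) (fun j => Qx j) (fun j => hS _ Sx j).
set K := [multinom kk j | j < n].
have PTp : PT S m ('X_[K] : cpoly R n).
  move=> a; rewrite msuppX inE => /eqP ->; exists x => //.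
  by apply/rowP => j; rewrite !mxE mnmE hkk.
have := hpull m _ PTp; rewrite /pullback comp_mpolyX.
have : forall j, exists U, istop (tnth f j) w U by move=> j; exact: top_exists (fn0 j).
move=> /choice [U hU].
have htop : istop (\prod_j tnth f j ^+ K j) w (\sum_j (K j)%:R * U j).
  by apply: top_prod => j; apply: top_exp.
case: htop => g gin [gv _] /(_ g gin) [t Tt et].
have := hw t Tt.
have e1 : valw w g = m%:R * dotp w t by rewrite /valw et dotpZ.
have e2 : dotp w (\sum_j x ord0 j *: s j) = \sum_j x ord0 j * dotp w (s j) by apply: dotp_sum.
have hd j : dotp w (s j) <= U j.
  case: (hU j) => a0 _ [_ hm].
  apply: (ch_dot _ (hs j)) => a [b bin <-]; exact: hm.
have le1 : m%:R * dotp w (\sum_j x ord0 j *: s j) <= \sum_j (K j)%:R * U j.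
  rewrite e2 mulr_sumr; apply: ler_sum => j _.
  rewrite mulrA -hkk mnmE; apply: ler_wpM2l => //; exact: ler0n.
have mp : 0 < m%:R :> R by rewrite ltr0n.
rewrite -gv e1 in le1.
move=> lt; have := ltr_pM2l mp; move=> h.
have : m%:R * dotp w t < m%:R * dotp w (\sum_j x ord0 j *: s j) by rewrite h.
lra.
Qed.

Lemma Sp_min T : admissible S f T -> S `<=` @orthant R n -> (forall j, tnth f j != 0) ->
  closure (S `&` @rat_points R n) = S -> S_prime S f `<=` T.
Proof.
move=> adm hS fn0 hcl y [x Sx [s [hs ->]]].
have [cT _ _ _ _] := adm.
have Tcl : closed T by apply: compact_closed => //; exact: norm_hausdorff.
set g := fun x' : 'rV[R]_n => \sum_j x' ord0 j *: s j.
have gc : continuous g.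
  apply: (cont_sum (F := fun j (x' : 'rV[R]_n) => x' ord0 j *: s j)) => j x'.
  apply: continuousZr_tmp; exact: coord_continuous.
rewrite ((closure_id T).1 Tcl).
move=> B hB.
have hB' : nbhs x (g @^-1` B) by exact: gc x B hB.
rewrite -hcl in Sx.
have [x' [[Sx' Qx'] Bx']] := Sx _ hB'.
exists (g x'); split => //.
exact: (Sp_rat adm hS fn0 Sx' Qx' hs).
Qed.

End Min.

Unset Implicit Arguments.
Set Strict Implicit.

Theorem proposition8p1 (R : realType) (n l : nat) (S : set 'rV[R]_n)
    (f : n.-tuple (cpoly R l)) :
  S `<=` @orthant R n -> compact S -> convex_set_rV S -> S 0 ->
  closure (S `&` @rat_points R n) = S ->
  (forall j : 'I_n, tnth f j != 0) ->
  admissible S f (S_prime S f) /\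
  (forall T : set 'rV[R]_l, admissible S f T -> S_prime S f `<=` T).
Proof.
move=> hS cS cvS S0 hcl fn0; split.
  split.
  - exact: Sp_compact.
  - exact: Sp_convex.
  - exact: Sp_orthant.
  - exact: Sp0.
  - move=> m p; exact: Sp_pull.
move=> T adm; exact: Sp_min.
Qed.
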